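(* Let $G^*$ and $G^*_u$ be as in the context. If $S\subseteq[12]$ is such that $\mathsf{MAIS}(G^*_S)<\alpha(G^*_{S,u})$, then $S$ is an independent set in $G^*_u$ and $\bar{\chi}(G^*_{S,u})=|S|$.
   Context: Consider the three-receiver unicast index coding problem with 12 messages indexed by $[12]$, where receiver $u_i$ demands the messages indexed by $W_i$ and knows those indexed by $K_i$: $W_1=\{1,2,3,4\}$, $W_2=\{5,6,7,8\}$, $W_3=\{9,10,11,12\}$, $K_1=\{5,6,9,10\}$, $K_2=\{1,2,9,11\}$, $K_3=\{1,3,5,7\}$. $G^*$ is the directed graph on vertex set $[12]$ with a directed edge $(a,b)$ iff $b\in K_i$, where $i$ is the unique index with $a\in W_i$. $G^*_u$ is the undirected graph on $[12]$ in which $\{a,b\}$ is an edge iff both $(a,b)$ and $(b,a)$ are edges of $G^*$. For $S\subseteq[12]$, $G^*_S$ and $G^*_{S,u}$ are the subgraphs of $G^*$ and $G^*_u$ induced by $S$. $\mathsf{MAIS}(D)$ is the maximum number of vertices of an acyclic induced subgraph of a directed graph $D$; $\alpha$ and $\bar{\chi}$ denote independence number and clique cover number. *)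

(* Defs.v *)
From mathcomp Require Import all_boot.
From mathcomp Require Import boolp.
Set Implicit Arguments. Unset Strict Implicit. Unset Printing Implicit Defensive.

(* Vertices: the messages [12]; vertex v : 'I_12 stands for message v+1. *)
Definition V := 'I_12.
Definition msg (v : V) : nat := (val v).+1.

Definition W (i : nat) : seq nat :=
  match i with
  | 1 => [:: 1; 2; 3; 4]
  | 2 => [:: 5; 6; 7; 8]
  | 3 => [:: 9; 10; 11; 12]
  | _ => [::]
  end.
Definition K (i : nat) : seq nat :=
  match i with
  | 1 => [:: 5; 6; 9; 10]
  | 2 => [:: 1; 2; 9; 11]
  | 3 => [:: 1; 3; 5; 7]
  | _ => [::]
  end.

Definition owner (a : nat) : nat :=
  if a \in W 1 then 1 else if a \in W 2 then 2 else 3.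

Definition Gstar : rel V := fun a b => msg b \in K (owner (msg a)).

Definition Gstar_u : rel V := fun a b => Gstar a b && Gstar b a.

Definition acyclic_on (e : rel V) (A : {set V}) : Prop :=
  ~ exists c : seq V, [/\ c != [::], all (fun x => x \in A) c & cycle e c].

Definition MAIS (e : rel V) (S : {set V}) : nat :=
  \max_(A : {set V} | (A \subset S) && `[< acyclic_on e A >]) #|A|.

Definition independent (e : rel V) (A : {set V}) : bool :=
  [forall x in A, forall y in A, (x != y) ==> ~~ e x y].
Definition clique (e : rel V) (A : {set V}) : bool :=
  [forall x in A, forall y in A, (x != y) ==> e x y].

Definition alpha (e : rel V) (S : {set V}) : nat :=
  \max_(A : {set V} | (A \subset S) && independent e A) #|A|.

(* Clique cover number of the subgraph induced by S: minimum number of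
   blocks of a partition of S into cliques (the default #|V| is never
   attained as a strict bound since the singleton partition has #|S| blocks). *)
Definition clique_cover (e : rel V) (S : {set V}) : nat :=
  \big[minn/#|V|]_(P : {set {set V}} |
       partition P S && [forall B in P, clique e B]) #|P|.

(* Main.v *)
Require Import Defs.
From mathcomp Require Import all_boot.
From mathcomp Require Import boolp.

Definition ord1 : seq nat := [:: 4; 8; 12; 10; 7; 1; 2; 3; 5; 6; 9; 11].
Definition ord2 : seq nat := [:: 8; 12; 11; 1; 2; 3; 4; 5; 6; 7; 9; 10].
Definition gs (a b : nat) : bool := b.+1 \in K (owner a.+1).
Definition gu a b := gs a b && gs b a.
Definition I12 := iota 0 12.
Definition mb (bs : seq bool) i := nth false bs i.
Definition indepL bs := all (fun i => all (fun j => mb bs i ==> mb bs j ==> (i != j) ==> ~~ gu i j) I12) I12.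
Definition rankedL o bs := all (fun i => all (fun j => mb bs i ==> mb bs j ==> gs i j ==> (index i.+1 o < index j.+1 o)) I12) I12.
Definition rk2L bs := if rankedL ord1 bs then true else rankedL ord2 bs.
Definition upd bs t x := set_nth false (set_nth false bs t false) x true.
Definition goodL bs := if indepL bs then (if rk2L bs then true else all (fun x => if mb bs x then true else if has (gu x) I12 then has (fun t => if mb bs t then rk2L (upd bs t x) else false) I12 else true) I12) else true.
Fixpoint allbs n := if n is n'.+1 then [seq b :: l | b <- [:: true; false], l <- allbs n'] else [:: [::]].

Lemma keyL : all goodL (allbs 12). Proof. vm_compute. reflexivity. Qed.

Lemma allbsP n (l : seq bool) : size l = n -> l \in allbs n.
Proof.
elim: n l => [|n IH] [|b l] //= [Hs].
have Hl := IH l Hs.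
by case: b; rewrite !mem_cat ?map_f ?orbT.
Qed.

Lemma allI12 (P : nat -> bool) : (forall x : V, P (val x)) -> all P I12.
Proof. move=> H; apply/allP => i; rewrite mem_iota add0n => /andP[_ i12]; exact: (H (Ordinal i12)). Qed.

Lemma ltI12 (x : V) : val x \in I12.
Proof. by rewrite mem_iota /= ltn_ord. Qed.

Lemma path_rank (r : V -> nat) (A : {set V}) :
  (forall x y, x \in A -> y \in A -> Gstar x y -> r x < r y) ->
  forall p x, x \in A -> all (fun z => z \in A) p -> path Gstar x p ->
  r x + size p <= r (last x p).
Proof.
move=> H; elim=> [|y p IH] x xA /= Ap; first by rewrite addn0.
case/andP: Ap => yA Ap /andP[exy pp].
have := IH y yA Ap pp; have := H x y xA yA exy.
rewrite addnS; move=> h1 h2; apply: leq_trans h2; by rewrite ltn_add2r.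
Qed.

Lemma rank_acyc (r : V -> nat) (A : {set V}) :
  (forall x y, x \in A -> y \in A -> Gstar x y -> r x < r y) ->
  acyclic_on Gstar A.
Proof.
move=> H [[|x p] [//= _ /andP[xA Ap]]] /=.
rewrite rcons_path => /andP[pp lp].
have h := @path_rank r A H p x xA Ap pp.
have lA : last x p \in A.
  by have := mem_last x p; rewrite inE => /orP[/eqP->//|]; move/allP: Ap; apply.
have := H _ _ lA xA lp.
move=> h2; have := leq_trans (leq_addr (size p) (r x)) h.
by rewrite leqNgt h2.
Qed.

Lemma rankedL_acyc o bs (A : {set V}) :
  (forall z : V, mb bs (val z) = (z \in A)) -> rankedL o bs -> acyclic_on Gstar A.
Proof.
move=> Hm Hr; apply: (@rank_acyc (fun v => index (msg v) o)) => x y xA yA exy.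
move/allP: Hr => /(_ _ (ltI12 x)) /allP /(_ _ (ltI12 y)).
by rewrite !Hm xA yA /=; move/implyP; apply.
Qed.

Lemma rk2L_acyc bs (A : {set V}) :
  (forall z : V, mb bs (val z) = (z \in A)) -> rk2L bs -> acyclic_on Gstar A.
Proof.
rewrite /rk2L => Hm; case: ifP => [H _|_ H]; exact: rankedL_acyc Hm H.
Qed.

Definition bsOf (A : {set V}) : seq bool := [seq x \in A | x <- enum V].

Lemma size_bsOf A : size (bsOf A) = 12.
Proof. by rewrite size_map size_enum_ord. Qed.

Lemma mb_bsOf A (z : V) : mb (bsOf A) (val z) = (z \in A).
Proof.
by rewrite /mb /bsOf (nth_map z) ?size_enum_ord ?ltn_ord // nth_ord_enum.
Qed.

Lemma mb_upd A (t x : V) (z : V) :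
  mb (upd (bsOf A) (val t) (val x)) (val z) = (z \in x |: (A :\ t)).
Proof.
rewrite /upd /mb !nth_set_nth /= in_setU1 in_setD1 -(mb_bsOf A z).
idtac.
rewrite -[z == x](inj_eq val_inj) -[z == t](inj_eq val_inj) /=.
rewrite nth_set_nth /=.
by case: (val z == val x) => //=; case: (val z == val t).
Qed.

Lemma MAIS_ge (S A : {set V}) : A \subset S -> acyclic_on Gstar A -> #|A| <= MAIS Gstar S.
Proof.
move=> AS Ha; rewrite /MAIS.
rewrite (bigD1 A) /=; first exact: leq_maxl.
by rewrite AS asboolT.
Qed.

Lemma indep_part (S : {set V}) :
  MAIS Gstar S < alpha Gstar_u S -> independent Gstar_u S.
Proof.
move=> Hlt; apply/negPn/negP => Hn.
move: Hn; rewrite /independent negb_forall_in => /existsP[x /andP[xS]].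
rewrite negb_forall_in => /existsP[y /andP[yS]]; rewrite negb_imply negbK => /andP[nxy exy].
pose P := fun B : {set V} => (B \subset S) && independent Gstar_u B.
have P0 : P set0 by rewrite /P sub0set; apply/forallP => z; rewrite in_set0.
move: Hlt; rewrite /alpha (bigmax_eq_arg set0 (P := P)) //.
case: arg_maxnP => // A /andP[AS Ai] _ Hlt.
have := allP keyL _ (@allbsP _ _ (size_bsOf A)).
rewrite /goodL.
have -> : indepL (bsOf A).
  apply: allI12 => a; apply: allI12 => b; rewrite !mb_bsOf.
  apply/implyP => aA; apply/implyP => bA; apply/implyP => nab.
  move/forallP: Ai => /(_ a); rewrite aA /= => /forallP /(_ b).
  by rewrite bA /= -(inj_eq val_inj) /= nab.
case: ifP => [Hr _|_ Hall].
  have := @MAIS_ge S A AS (@rk2L_acyc _ A (mb_bsOf A) Hr); by rewrite leqNgt Hlt.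
have [z [w [zS zA ezw]]] : exists z w, [/\ z \in S, z \notin A & Gstar_u z w].
  case xA: (x \in A); last by exists x, y; rewrite xA.
  case yA: (y \in A); last by exists y, x; rewrite yA yS /Gstar_u andbC.
  move/forallP: Ai => /(_ x); rewrite xA /= => /forallP /(_ y); rewrite yA nxy /=.
  by rewrite exy.
move/allP: Hall => /(_ _ (ltI12 z)).
rewrite mb_bsOf (negbTE zA).
have -> : has (gu (val z)) I12 by apply/hasP; exists (val w); [exact: ltI12|exact: ezw].
case/hasP => t; rewrite mem_iota add0n => /andP[_ t12].
have -> : t = val (Ordinal t12) by [].
rewrite mb_bsOf; case: ifP => // tA Hr.
have sub : z |: (A :\ Ordinal t12) \subset S.
  by rewrite subUset sub1set zS (subset_trans (subD1set _ _) AS).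
have := @MAIS_ge S _ sub (@rk2L_acyc _ _ (mb_upd A (Ordinal t12) z) Hr).
rewrite cardsU1 in_setD1 (negbTE zA) andbF /=; move: Hlt; rewrite (cardsD1 (Ordinal t12) A) tA /=.
by rewrite add1n ltnNge => /negP.
Qed.

Lemma part_card (S : {set V}) (P : {set {set V}}) :
  independent Gstar_u S -> partition P S -> [forall B in P, clique Gstar_u B] ->
  #|P| = #|S|.
Proof.
move=> Hi Hp Hc; rewrite (card_partition Hp) -sum1_card.
apply: eq_bigr => B BP; apply/eqP; rewrite eqn_leq; apply/andP; split.
  rewrite card_gt0; apply/negP => /eqP B0; move: BP; rewrite B0.
  by rewrite (partition0 Hp).
have BS : B \subset S.
  by rewrite -(cover_partition Hp); apply: bigcup_sup.
apply/card_le1_eqP => a b aB bB; apply/eqP/negPn/negP => nab.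
move/forallP: Hc => /(_ B); rewrite BP /= => /forallP /(_ a); rewrite aB /=.
move=> /forallP /(_ b); rewrite bB eq_sym nab /= => eab.
move/forallP: Hi => /(_ a); rewrite (subsetP BS _ aB) /= => /forallP /(_ b).
by rewrite (subsetP BS _ bB) eq_sym nab eab.
Qed.

Lemma cc_part (S : {set V}) :
  independent Gstar_u S -> clique_cover Gstar_u S = #|S|.
Proof.
move=> Hi.
pose P0 := [set [set x] | x in S].
have cP0 : #|P0| = #|S| by rewrite card_imset //; exact: set1_inj.
have HP0 : partition P0 S && [forall B in P0, clique Gstar_u B].
  have H1 : {in S &, forall i j, j != i -> [disjoint [set i] & [set j]]}.
    by move=> i j _ _ nji; rewrite disjoints1 inE eq_sym.
  have H2 : set0 \notin P0.
    by apply/imsetP => -[i _ H]; move: (cards1 i); rewrite -H cards0.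
  apply/andP; split.
    apply/and3P; split.
    - rewrite cover_imset; apply/eqP/setP => z; apply/bigcupP/idP.
        by case=> i iS; rewrite inE => /eqP ->.
      by move=> zS; exists z => //; rewrite inE.
    - by case: (trivIimset H1 H2).
    - exact: H2.
  apply/forallP => B; apply/implyP => /imsetP[i _ ->].
  apply/forallP => a; apply/implyP; rewrite inE => /eqP ->.
  apply/forallP => b; apply/implyP; rewrite inE => /eqP ->.
  by rewrite eqxx.
rewrite /clique_cover; apply/eqP; rewrite eqn_leq; apply/andP; split.
  rewrite -cP0.
  have : P0 \in index_enum {set {set V}} by rewrite mem_index_enum.
  elim: (index_enum _) => [//|Q r IH]; rewrite inE big_cons => /orP[/eqP <-|Hr].
    by rewrite HP0 geq_minl.
  case: ifP => _; last exact: IH.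
  by rewrite geq_min IH ?orbT.
apply: (big_ind (fun n => #|S| <= n)) => //.
- exact: max_card.
- by move=> m n Hm Hn; rewrite leq_min Hm Hn.
- move=> P /andP[Hp Hc]; by rewrite (@part_card S P Hi Hp Hc).
Qed.

Theorem corollary1 (S : {set V}) :
  MAIS Gstar S < alpha Gstar_u S ->
  independent Gstar_u S /\ clique_cover Gstar_u S = #|S|.
Proof.
move=> H; have Hi := @indep_part S H; split => //; exact: (@cc_part S Hi).
Qed.
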